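(* Let $\mathcal{G}^s$ be an SCG and let $\pi^f$ be a directed graph on $\mathcal{V}^f$ such that $\pi^f$ is acyclic, every edge $A_s\to B_{s'}$ of $\pi^f$ satisfies $s\le s'$, and the reduction of $\pi^f$ is a subgraph of $\mathcal{G}^s$. Then there exists an FTCG $\mathcal{G}^f\in\mathcal{C}(\mathcal{G}^s)$ which contains $\pi^f$ (as a subgraph).
   Context: Let $\mathcal{V}$ be a finite set of time series, $\mathcal{V}^f=\{X_s: X\in\mathcal{V},s\in\mathbb{Z}\}$. An FTCG is a DAG on $\mathcal{V}^f$ whose edges $X_s\to Z_{s'}$ satisfy $s\le s'$. The reduction of a directed graph $\mathcal{H}$ on $\mathcal{V}^f$ is the directed graph on $\mathcal{V}$ with an edge $X\to Z$ iff $\mathcal{H}$ has an edge $X_{s-\gamma}\to Z_s$ for some $s$ and $\gamma\ge0$. The SCG reduced from an FTCG is its reduction; an SCG is a graph reduced from some FTCG, and $\mathcal{C}(\mathcal{G}^s)$ is the class of FTCGs whose reduction equals $\mathcal{G}^s$. *)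

(* Defs.v *)
From Stdlib Require Import ZArith List Relations.
Open Scope Z_scope.

Definition vf (V : Type) : Type := (V * Z)%type.

Definition fgraph (V : Type) := vf V -> vf V -> Prop.
Definition sgraph (V : Type) := V -> V -> Prop.

Definition finite_type (V : Type) : Prop := exists l : list V, forall x : V, In x l.

Definition acyclic {V : Type} (H : fgraph V) : Prop :=
  forall x : vf V, ~ clos_trans (vf V) H x x.

Definition time_respecting {V : Type} (H : fgraph V) : Prop :=
  forall (X Y : V) (s s' : Z), H (X, s) (Y, s') -> s <= s'.

Definition is_FTCG {V : Type} (H : fgraph V) : Prop :=
  acyclic H /\ time_respecting H.

Definition reduction {V : Type} (H : fgraph V) : sgraph V :=
  fun X Y => exists (s gamma : Z), 0 <= gamma /\ H (X, s - gamma) (Y, s).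

Definition sgraph_eq {V : Type} (G1 G2 : sgraph V) : Prop :=
  forall X Y, G1 X Y <-> G2 X Y.

Definition sgraph_sub {V : Type} (G1 G2 : sgraph V) : Prop :=
  forall X Y, G1 X Y -> G2 X Y.

Definition fgraph_sub {V : Type} (H1 H2 : fgraph V) : Prop :=
  forall a b, H1 a b -> H2 a b.

Definition is_SCG {V : Type} (Gs : sgraph V) : Prop :=
  exists Gf : fgraph V, is_FTCG Gf /\ sgraph_eq (reduction Gf) Gs.

Definition in_class {V : Type} (Gs : sgraph V) (Gf : fgraph V) : Prop :=
  is_FTCG Gf /\ sgraph_eq (reduction Gf) Gs.

(* Main.v *)
Require Import Defs.
From Stdlib Require Import ZArith List Relations Lia.

Definition newG {V : Type} (Gs : sgraph V) (pif : fgraph V) : fgraph V :=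
  fun a b => pif a b \/ (Gs (fst a) (fst b) /\ snd b = snd a + 1).

Lemma newG_time {V : Type} (Gs : sgraph V) (pif : fgraph V) :
  time_respecting pif -> forall a b, newG Gs pif a b -> snd a <= snd b.
Proof.
  intros Ht [X s] [Y s'] [H|[_ H]]; simpl in *.
  - exact (Ht _ _ _ _ H).
  - lia.
Qed.

Lemma newG_tc {V : Type} (Gs : sgraph V) (pif : fgraph V) :
  time_respecting pif -> forall a b, clos_trans _ (newG Gs pif) a b ->
  snd a <= snd b /\ (snd a = snd b -> clos_trans _ pif a b).
Proof.
  intros Ht a b H; induction H as [a b H|a b c _ [IH1 IH2] _ [IH3 IH4]].
  - split; [exact (newG_time Gs pif Ht a b H)|].
    intros E. destruct H as [H|[_ H]]; [now constructor|lia].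
  - split; [lia|]. intros E. apply t_trans with b; [apply IH2|apply IH4]; lia.
Qed.

Theorem lemma5 (V : Type) (HV : finite_type V) (Gs : sgraph V) (pif : fgraph V) :
  is_SCG Gs ->
  acyclic pif ->
  time_respecting pif ->
  sgraph_sub (reduction pif) Gs ->
  exists Gf : fgraph V, in_class Gs Gf /\ fgraph_sub pif Gf.
Proof.
  intros _ Hac Ht Hsub.
  exists (newG Gs pif). split; [split; [split|]|].
  - intros x Hx. destruct (newG_tc Gs pif Ht x x Hx) as [_ H].
    exact (Hac x (H eq_refl)).
  - intros X Y s s' H. exact (newG_time Gs pif Ht (X, s) (Y, s') H).
  - intros X Y; split.
    + intros (s & g & Hg & [H|[H _]]).
      * apply Hsub. exists s, g. auto.
      * exact H.
    + intros H. exists 1, 1. split; [lia|]. right. simpl. split; [exact H|lia].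
  - intros a b H. now left.
Qed.
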